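(* Let $\kappa_l=1$ for all $l\ge1$, and for even $N\ge4$ let $\gamma_0(N)=\sum_{n=0}^{N-1}|f_N(k_n)|$ with $f_N(k)=2\sum_{l=1}^{N/2-1}\sin(kl)+1$ and $k_n=(2n+1)\pi/N$. Then there exist constants $0<c\le C$ and $N_0$ such that $c\,N\ln N\le\gamma_0(N)\le C\,N\ln N$ for all even $N\ge N_0$. Consequently $I_0(\Delta)=[\gamma_0(N)/2]^2T^2$ scales as $T^2N^2(\ln N)^2$ (super-Heisenberg scaling).
   Context: $T>0$ is the probe time; $I_0(\Delta)=[\gamma_0(N)/2]^2T^2$ is the optimally controlled quantum Fisher information for estimating the pairing strength $\Delta$ in the long-range Kitaev chain with decay law $\kappa_l$. *)

(* Defs.v *)
From Stdlib Require Import Reals.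
Open Scope R_scope.

Definition kappa (l : nat) : R := 1.

Fixpoint sum_l (k : R) (m : nat) : R :=
  match m with
  | O => 0
  | S m' => sum_l k m' + kappa m * sin (k * INR m)
  end.

Definition f_N (N : nat) (k : R) : R := 2 * sum_l k (Nat.div N 2 - 1) + 1.

Definition k_n (N n : nat) : R := (2 * INR n + 1) * PI / INR N.

Fixpoint sum_n (N : nat) (m : nat) : R :=
  match m with
  | O => 0
  | S m' => sum_n N m' + Rabs (f_N N (k_n N m'))
  end.

Definition gamma0 (N : nat) : R := sum_n N N.

Definition I0 (N : nat) (T : R) : R := (gamma0 N / 2) ^ 2 * T ^ 2.

(* Main.v *)
Require Import Defs.
From Stdlib Require Import Reals Lra Lia.
Open Scope R_scope.

Lemma sin_ge_third a : 0 <= a -> a <= PI/2 -> a/3 <= sin a.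
Proof.
intros. pose proof PI_4. assert (a <= PI) by lra. pose proof (proj1 (SIN a H H2)).
unfold sin_lb, sin_approx in H3. cbn [sum_f_R0] in H3. unfold sin_term in H3.
rewrite !INR_IZR_INZ in H3. cbv [Factorial.fact Nat.mul Nat.add Z.of_nat Pos.of_succ_nat Pos.succ] in H3.
simpl pow in H3.
assert (a <= 2) by lra.
assert (0 <= a*a <= 4) by nra.
assert (0 <= (a*a)*(a*a)*(1/120 - (a*a)/5040)) by (apply Rmult_le_pos; nra).
assert (0 <= a*((a*a)*(a*a)*(1/120 - (a*a)/5040))) by (apply Rmult_le_pos; lra).
assert (0 <= a*(2/3 - a*a/6)) by (apply Rmult_le_pos; lra).
lra.
Qed.

Lemma ln_le' x y : 0 < x -> x <= y -> ln x <= ln y.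
Proof. intros. destruct (Rle_lt_or_eq_dec x y H0). left; apply ln_increasing; auto. subst; lra. Qed.

Lemma ln_le_sub1 y : 0 < y -> ln y <= y - 1.
Proof.
intros. pose proof (exp_ineq1_le (y-1)). rewrite <- (ln_exp (y-1)).
apply ln_le'; lra.
Qed.

Fixpoint sumR (F : nat -> R) (m : nat) : R :=
  match m with O => 0 | S m' => sumR F m' + F m' end.

Lemma sumR_le F G m : (forall n, (n < m)%nat -> F n <= G n) -> sumR F m <= sumR G m.
Proof. induction m; simpl; intros. lra. assert (F m <= G m) by (apply H; lia).
assert (sumR F m <= sumR G m) by (apply IHm; intros; apply H; lia). lra. Qed.

Lemma sumR_ext F G m : (forall n, (n < m)%nat -> F n = G n) -> sumR F m = sumR G m.
Proof. induction m; simpl; intros. lra. rewrite (H m) by lia. rewrite IHm; auto. Qed.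

Lemma sumR_plus F G m : sumR (fun n => F n + G n) m = sumR F m + sumR G m.
Proof. induction m; simpl; intros. lra. rewrite IHm. ring. Qed.

Lemma sumR_scal c F m : sumR (fun n => c * F n) m = c * sumR F m.
Proof. induction m; simpl; intros. lra. rewrite IHm. ring. Qed.

Lemma sumR_const c m : sumR (fun _ => c) m = INR m * c.
Proof. induction m; simpl sumR. simpl; lra. rewrite IHm, S_INR. ring. Qed.

Lemma sumR_nonneg_mono F j m : (forall n, 0 <= F n) -> (j <= m)%nat -> sumR F j <= sumR F m.
Proof. intros H. induction 1. lra. simpl. specialize (H m). lra. Qed.

Lemma sumR_shift F m : sumR F (S m) = F 0%nat + sumR (fun n => F (S n)) m.
Proof. induction m. simpl; lra. change (sumR F (S (S m))) with (sumR F (S m) + F (S m)).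
rewrite IHm. simpl. ring. Qed.

Lemma sumR_rev m : forall F, sumR (fun n => F (m - S n)%nat) m = sumR F m.
Proof.
induction m; intros F. reflexivity.
change (sumR (fun n => F (S m - S n)%nat) m + F (S m - S m)%nat = sumR F (S m)).
rewrite sumR_shift. rewrite Nat.sub_diag.
rewrite <- (IHm (fun n => F (S n))).
rewrite (sumR_ext (fun n => F (m - n)%nat) (fun n => F (S (m - S n)))). ring.
intros. f_equal. lia.
Qed.

Definition Harm (m : nat) : R := sumR (fun j => / (INR j + 1)) m.

Lemma H_lb m : ln (INR m + 1) <= Harm m.
Proof.
induction m. simpl. unfold Harm; simpl. rewrite Rplus_0_l, ln_1. lra.
unfold Harm in *. simpl sumR. rewrite S_INR.
pose proof (pos_INR m).
assert (E : INR m + 1 + 1 = (INR m + 1) * ((INR m + 1 + 1) / (INR m + 1))) by (field; lra).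
rewrite E, ln_mult by (try apply Rdiv_lt_0_compat; lra).
pose proof (ln_le_sub1 ((INR m + 1 + 1) / (INR m + 1))).
assert ((INR m + 1 + 1) / (INR m + 1) - 1 = / (INR m + 1)) by (field; lra).
assert (0 < (INR m + 1 + 1) / (INR m + 1)) by (apply Rdiv_lt_0_compat; lra).
lra.
Qed.

Lemma H_ub m : (1 <= m)%nat -> Harm m <= 1 + ln (INR m).
Proof.
induction 1. unfold Harm; simpl. rewrite ln_1. lra.
unfold Harm in *. simpl sumR. rewrite S_INR.
assert (1 <= INR m) by (apply (le_INR 1); auto).
assert (E : INR m = (INR m + 1) * (INR m / (INR m + 1))) by (field; lra).
assert (Hq : 0 < INR m / (INR m + 1)) by (apply Rdiv_lt_0_compat; lra).
pose proof (ln_le_sub1 (INR m / (INR m + 1)) Hq).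
assert (ln (INR m) = ln (INR m + 1) + ln (INR m / (INR m + 1))).
{ rewrite <- ln_mult by lra. now rewrite <- E. }
assert (INR m / (INR m + 1) - 1 = - / (INR m + 1)) by (field; lra).
lra.
Qed.

Lemma prod_sin c u : 2 * sin c * sin u = cos (u - c) - cos (u + c).
Proof. rewrite cos_minus, cos_plus. ring. Qed.

Lemma tele k m : 2 * sin (k/2) * sum_l k m = cos (k/2) - cos (k * INR m + k/2).
Proof.
induction m.
- simpl. replace (k*0 + k/2) with (k/2) by ring. ring.
- change (sum_l k (S m)) with (sum_l k m + kappa (S m) * sin (k * INR (S m))).
  unfold kappa. rewrite S_INR.
  replace (2 * sin (k / 2) * (sum_l k m + 1 * sin (k * (INR m + 1))))
    with (2 * sin (k / 2) * sum_l k m + 2 * sin (k/2) * sin (k * (INR m + 1))) by ring.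
  rewrite IHm, prod_sin.
  replace (k * (INR m + 1) - k / 2) with (k * INR m + k/2) by field.
  replace (k * (INR m + 1) + k / 2) with (k * (INR m + 1) + k/2) by ring.
  ring.
Qed.

Lemma term_id K n : (2 <= K)%nat -> (n < 2*K)%nat ->
  let x := k_n (2*K) n / 2 in
  0 < x < PI /\
  Rabs (Rabs (f_N (2*K) (k_n (2*K) n)) - Rabs (cos x) * / sin x) <= 2.
Proof.
intros HK Hn x.
assert (HKr : 2 <= INR K) by (apply (le_INR 2); auto).
assert (Hnr : INR n + 1 <= 2 * INR K).
{ rewrite <- S_INR. replace 2 with (INR 2) by (simpl; lra). rewrite <- mult_INR. apply le_INR. lia. }
pose proof (pos_INR n). pose proof PI_RGT_0.
assert (Ex : x = (2 * INR n + 1) * PI / (4 * INR K)).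
{ unfold x, k_n. rewrite mult_INR. simpl INR. field. lra. }
assert (Hx : 0 < x < PI).
{ rewrite Ex. split. apply Rdiv_lt_0_compat; nra.
  apply Rmult_lt_reg_r with (4 * INR K). lra. unfold Rdiv. rewrite Rmult_assoc, Rinv_l by lra. nra. }
split; auto.
assert (Hs : 0 < sin x) by (apply sin_gt_0; lra).
unfold f_N.
replace (Nat.div (2*K) 2) with K by (rewrite Nat.mul_comm, Nat.div_mul; lia).
set (k := k_n (2*K) n). fold k in x.
pose proof (tele k (K-1)) as T.
replace (k/2) with x in T by reflexivity.
rewrite minus_INR in T by lia. simpl (INR 1) in T.
set (A := INR n * PI + PI / 2).
assert (EA : k * (INR K - 1) + x = A - x).
{ unfold A. assert (k = 2*x) by (unfold x; field). rewrite H1, Ex. field. lra. }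
rewrite EA, cos_minus in T.
assert (cA : cos A = 0). { apply cos_eq_0_1. exists (Z.of_nat n). unfold A. now rewrite <- INR_IZR_INZ. }
rewrite cA in T.
pose proof (SIN_bound A).
set (S := sum_l k (K - 1)) in *.
assert (E : 2 * S + 1 = cos x * / sin x + (1 - sin A)).
{ apply Rmult_eq_reg_r with (sin x). 2: lra.
  replace ((cos x * / sin x + (1 - sin A)) * sin x) with (cos x + (1 - sin A) * sin x) by (field; lra). lra. }
rewrite E.
assert (Rabs (cos x * / sin x) = Rabs (cos x) * / sin x).
{ rewrite Rabs_mult, Rabs_inv, (Rabs_pos_eq (sin x)) by lra. reflexivity. }
rewrite <- H2.
apply Rabs_le. split.
- pose proof (Rabs_triang_inv (cos x * / sin x) (-(1 - sin A))).
  replace (cos x * / sin x - - (1 - sin A)) with (cos x * / sin x + (1 - sin A)) in H3 by ring.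
  rewrite Rabs_Ropp in H3. rewrite (Rabs_pos_eq (1 - sin A)) in H3 by lra. lra.
- pose proof (Rabs_triang (cos x * / sin x) (1 - sin A)).
  rewrite (Rabs_pos_eq (1 - sin A)) in H3 by lra. lra.
Qed.

Lemma g_upper x : 0 < x < PI -> Rabs (cos x) * / sin x <= 3 / x + 3 / (PI - x).
Proof.
intros Hx. assert (Hs : 0 < sin x) by (apply sin_gt_0; lra).
assert (Rabs (cos x) * / sin x <= / sin x).
{ pose proof (COS_bound x). assert (Rabs (cos x) <= 1) by (apply Rabs_le; lra).
  pose proof (Rinv_0_lt_compat _ Hs). nra. }
assert (0 < 3/x) by (apply Rdiv_lt_0_compat; lra).
assert (0 < 3/(PI - x)) by (apply Rdiv_lt_0_compat; lra).
destruct (Rle_lt_dec x (PI/2)).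
- pose proof (sin_ge_third x ltac:(lra) r) as W.
  assert (W2 : / sin x <= / (x/3)) by (apply Rinv_le_contravar; lra).
  replace (/ (x/3)) with (3/x) in W2 by (field; lra). lra.
- pose proof (sin_ge_third (PI - x) ltac:(lra) ltac:(lra)) as W. rewrite sin_PI_x in W.
  assert (W2 : / sin x <= / ((PI - x)/3)) by (apply Rinv_le_contravar; lra).
  replace (/ ((PI - x)/3)) with (3/(PI - x)) in W2 by (field; lra). lra.
Qed.

Lemma g_lower x : 0 < x <= PI/2 -> / x - 1 <= Rabs (cos x) * / sin x.
Proof.
intros Hx. pose proof PI_4. assert (Hs : 0 < sin x) by (apply sin_gt_0; lra).
assert (hc : 0 <= cos x) by (apply cos_ge_0; lra).
rewrite Rabs_pos_eq by lra.
assert (sin x <= x) by (left; apply sin_lt_x; lra).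
assert (cos x >= 1 - x*x/2).
{ replace x with (2 * (x/2)) at 1 by field. rewrite cos_2a_sin.
  assert (sin (x/2) <= x/2) by (left; apply sin_lt_x; lra).
  assert (0 <= sin (x/2)) by (apply sin_ge_0; lra). nra. }
assert (/ x <= / sin x) by (apply Rinv_le_contravar; lra).
assert (cos x * / x <= cos x * / sin x) by (apply Rmult_le_compat_l; lra).
assert ((1 - x*x/2) * / x <= cos x * / x).
{ apply Rmult_le_compat_r. left; apply Rinv_0_lt_compat; lra. lra. }
replace ((1 - x*x/2) * / x) with (/x - x/2) in H4 by (field; lra).
lra.
Qed.

Lemma abs_bnd a b : Rabs a <= b -> -b <= a <= b.
Proof. intros. pose proof (Rle_abs a). pose proof (Rle_abs (-a)). rewrite Rabs_Ropp in H1. lra. Qed.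

Lemma div_le_r a b c : 0 <= a -> 0 < b -> b <= c -> a / c <= a / b.
Proof. intros. unfold Rdiv. apply Rmult_le_compat_l; auto. apply Rinv_le_contravar; auto. Qed.

Lemma sum_n_sumR N m : sum_n N m = sumR (fun n => Rabs (f_N N (k_n N n))) m.
Proof. induction m; simpl; auto. rewrite IHm; auto. Qed.

Lemma gamma0_sumR N : gamma0 N = sumR (fun n => Rabs (f_N N (k_n N n))) N.
Proof. apply sum_n_sumR. Qed.

Definition xk K n := k_n (2*K) n / 2.

Lemma xk_eq K n : (1 <= K)%nat -> xk K n = (2 * INR n + 1) * PI / (4 * INR K).
Proof. intros. assert (1 <= INR K) by (apply (le_INR 1); auto).
unfold xk, k_n. rewrite mult_INR. simpl INR. field. lra. Qed.

Lemma gamma_upper K : (2 <= K)%nat ->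
  gamma0 (2*K) <= 6 * INR (2*K) + 4 * INR (2*K) * ln (INR (2*K)).
Proof.
intros HK. assert (HKr : 2 <= INR K) by (apply (le_INR 2); auto).
pose proof PI_RGT_0 as Hpi. pose proof PI2_3_2 as Hpi3.
rewrite gamma0_sumR.
set (N := (2*K)%nat).
assert (HN : INR N = 2 * INR K) by (unfold N; rewrite mult_INR; simpl; ring).
apply Rle_trans with (sumR (fun n => (3 / xk K n + 3 / (PI - xk K n)) + 2) N).
{ apply sumR_le. intros n Hn. destruct (term_id K n HK Hn) as [Hx Hb].
  fold (xk K n) in Hx, Hb. pose proof (g_upper _ Hx).
  fold N in Hb. apply abs_bnd in Hb. lra. }
rewrite sumR_plus, sumR_plus, sumR_const.
assert (Er : sumR (fun n => 3 / (PI - xk K n)) N = sumR (fun n => 3 / xk K n) N).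
{ rewrite <- (sumR_rev N (fun n => 3 / xk K n)). apply sumR_ext. intros n Hn. f_equal.
  rewrite !xk_eq by lia. rewrite minus_INR by lia. rewrite HN, S_INR. field. lra. }
rewrite Er.
assert (Hb : sumR (fun n => 3 / xk K n) N <= sumR (fun n => (2 * INR N) * / (INR n + 1)) N).
{ apply sumR_le. intros n Hn. pose proof (pos_INR n). rewrite xk_eq by lia.
  replace (3 / ((2 * INR n + 1) * PI / (4 * INR K))) with ((12 * INR K) / ((2 * INR n + 1) * PI)) by (field; nra).
  apply Rle_trans with ((12 * INR K) / (3 * (INR n + 1))).
  apply div_le_r; nra.
  rewrite HN. right. field. lra. }
rewrite sumR_scal in Hb. fold (Harm N) in Hb.
pose proof (H_ub N ltac:(unfold N; lia)).
assert (0 <= INR N) by apply pos_INR.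
assert (2 * INR N * Harm N <= 2 * INR N * (1 + ln (INR N))) by (apply Rmult_le_compat_l; lra).
lra.
Qed.

Lemma gamma_lower K : (2 <= K)%nat ->
  INR K / 2 * ln (INR K + 1) - 3 * INR K <= gamma0 (2*K).
Proof.
intros HK. assert (HKr : 2 <= INR K) by (apply (le_INR 2); auto).
pose proof PI_RGT_0 as Hpi. pose proof PI_4 as Hpi4.
rewrite gamma0_sumR.
apply Rle_trans with (sumR (fun n => Rabs (f_N (2 * K) (k_n (2 * K) n))) K).
2: { apply sumR_nonneg_mono. intros; apply Rabs_pos. lia. }
apply Rle_trans with (sumR (fun n => / xk K n - 3) K).
2: { apply sumR_le. intros n Hn. destruct (term_id K n HK ltac:(lia)) as [Hx Hb].
  fold (xk K n) in Hx, Hb.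
  assert (H0 : xk K n <= PI/2).
  { rewrite xk_eq by lia. assert (INR n + 1 <= INR K) by (rewrite <- S_INR; apply le_INR; lia).
    apply Rmult_le_reg_r with (4 * INR K). lra. unfold Rdiv. rewrite Rmult_assoc, Rinv_l by lra. nra. }
  pose proof (g_lower _ (conj (proj1 Hx) H0)). apply abs_bnd in Hb. lra. }
apply Rle_trans with (sumR (fun n => (INR K / 2) * / (INR n + 1) - 3) K).
2: { apply sumR_le. intros n Hn. pose proof (pos_INR n). rewrite xk_eq by lia.
  replace (/ ((2 * INR n + 1) * PI / (4 * INR K))) with ((4 * INR K) / ((2 * INR n + 1) * PI)) by (field; nra).
  enough (INR K / 2 * / (INR n + 1) <= 4 * INR K / ((2 * INR n + 1) * PI)) by lra.
  apply Rle_trans with ((4 * INR K) / (8 * (INR n + 1))).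
  right. field. lra.
  apply div_le_r; nra. }
replace (sumR (fun n => INR K / 2 * / (INR n + 1) - 3) K) with
  (sumR (fun n => INR K / 2 * / (INR n + 1) + -3) K) by (apply sumR_ext; intros; ring).
rewrite sumR_plus, sumR_scal, sumR_const. fold (Harm K).
pose proof (H_lb K).
assert (INR K / 2 * ln (INR K + 1) <= INR K / 2 * Harm K) by (apply Rmult_le_compat_l; lra).
lra.
Qed.

Theorem mainTheorem6 :
  exists (c C : R) (N0 : nat),
    0 < c /\ c <= C /\
    (forall N : nat, (4 <= N)%nat -> Nat.Even N -> (N0 <= N)%nat ->
       c * INR N * ln (INR N) <= gamma0 N <= C * INR N * ln (INR N) /\
       (forall T : R, 0 < T ->
          (c / 2) ^ 2 * (T ^ 2 * INR N ^ 2 * ln (INR N) ^ 2) <= I0 N T <=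
          (C / 2) ^ 2 * (T ^ 2 * INR N ^ 2 * ln (INR N) ^ 2))).
Proof.
exists (1/8), 10, (3^14)%nat.
split. lra. split. lra.
intros N H4 [K HK] HN0.
apply le_INR in HN0. rewrite pow_INR in HN0.
replace (INR 3) with 3 in HN0 by (simpl; ring).
assert (HL : 14 <= ln (INR N)).
{ assert (0 < 3 ^ 14) by (apply pow_lt; lra).
  pose proof (ln_le' _ _ H HN0). rewrite ln_pow in H0 by lra.
  assert (1 <= ln 3).
  { rewrite <- (ln_exp 1). apply ln_le'. apply exp_pos. apply exp_le_3. }
  replace (INR 14) with 14 in H0 by (simpl; ring). nra. }
clear HN0.
subst N.
assert (HK2 : (2 <= K)%nat) by lia.
assert (HKr : 2 <= INR K) by (apply (le_INR 2); auto).
assert (HN : INR (2*K) = 2 * INR K) by (rewrite mult_INR; simpl; ring).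
set (L := ln (INR (2*K))) in *.
assert (Hup : gamma0 (2*K) <= 10 * INR (2*K) * L).
{ pose proof (gamma_upper K HK2). fold L in H. rewrite HN in *. nra. }
assert (Hlo : 1/8 * INR (2*K) * L <= gamma0 (2*K)).
{ pose proof (gamma_lower K HK2).
  assert (ln (INR K) <= ln (INR K + 1)) by (apply ln_le'; lra).
  assert (L = ln 2 + ln (INR K)) by (unfold L; rewrite HN; apply ln_mult; lra).
  assert (ln 2 <= 1) by (pose proof (ln_le_sub1 2); lra).
  assert (INR K / 2 * (L - 1) <= INR K / 2 * ln (INR K + 1)) by (apply Rmult_le_compat_l; lra).
  rewrite HN. nra. }
split. split; auto.
intros T HT. unfold I0.
assert (0 <= 1/8 * INR (2*K) * L) by (rewrite HN; nra).
assert (0 <= T^2) by (apply pow_le; lra).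
split.
- replace ((1/8/2)^2 * (T^2 * INR (2*K)^2 * L^2)) with ((1/8 * INR (2*K) * L / 2)^2 * T^2) by field.
  apply Rmult_le_compat_r; auto. apply pow_incr. lra.
- replace ((10/2)^2 * (T^2 * INR (2*K)^2 * L^2)) with ((10 * INR (2*K) * L / 2)^2 * T^2) by field.
  apply Rmult_le_compat_r; auto. apply pow_incr. lra.
Qed.
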